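(* Let $K$ be a field, $\mathcal A$ a commutative $K$-algebra, and $V$ a $K$-subspace of $\mathcal A$ such that every element of $\sqrt V$ is algebraic over $K$. Then $V$ is a Mathieu subspace of $\mathcal A$ if and only if $\sqrt V$ is an ideal of $\mathcal A$.
   Context: Algebras are unital. $\sqrt V$ is the set of $a\in\mathcal A$ with $a^m\in V$ for all sufficiently large $m$. A $K$-subspace $V$ of a commutative algebra $\mathcal A$ is a Mathieu subspace if whenever $a\in\mathcal A$ satisfies $a^m\in V$ for all $m\ge1$, then for every $b\in\mathcal A$ there is $N$ with $ba^m\in V$ for all $m\ge N$. *)

(* Defs.v *)
From HB Require Import structures.
From mathcomp Require Import all_boot all_order all_algebra.
Set Implicit Arguments. Unset Strict Implicit. Unset Printing Implicit Defensive.
Import GRing.Theory.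
Local Open Scope ring_scope.

Section MathieuDefs.
Variables (K : fieldType) (A : comAlgType K).

Definition radical (V : {pred A}) : A -> Prop :=
  fun a => exists N : nat, forall m : nat, (N <= m)%N -> a ^+ m \in V.

Definition algebraic_over (a : A) : Prop :=
  exists2 p : {poly K}, p != 0 & horner_alg a p = 0.

Definition mathieu_subspace (V : {pred A}) : Prop :=
  forall a : A, (forall m : nat, (1 <= m)%N -> a ^+ m \in V) ->
    forall b : A, exists N : nat, forall m : nat, (N <= m)%N -> b * a ^+ m \in V.

Definition is_ideal (S : A -> Prop) : Prop :=
  [/\ S 0,
      (forall x y, S x -> S y -> S (x + y)) &
      (forall r x, S x -> S (r * x))].
End MathieuDefs.

(* Main.v *)
Require Import Defs.
From HB Require Import structures.
From mathcomp Require Import all_boot all_order all_algebra.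
From mathcomp Require Import ring zify.
Import GRing.Theory.
Local Open Scope ring_scope.
Set Implicit Arguments. Unset Strict Implicit.

Section Gen.
Variable R : comNzRingType.
Implicit Types a h e n z : R.

Lemma L1 a h k : a ^+ k = a ^+ k.+1 * h -> forall j, a ^+ k = a ^+ (k + j) * h ^+ j.
Proof.
move=> H; elim=> [|j IH]; first by rewrite addn0 expr0 mulr1.
rewrite {1}IH exprD {1}H addnS !exprS exprD; ring.
Qed.

Lemma L2 a h k : a ^+ k = a ^+ k.+1 * h -> forall j, a ^+ k * h ^+ k = a ^+ (k + j) * h ^+ (k + j).
Proof. by move=> H j; rewrite {1}(L1 H j) [h ^+ (k + j)]exprD; ring. Qed.

Lemma L4 a h k : a ^+ k = a ^+ k.+1 * h -> a ^+ k * (a ^+ k * h ^+ k) = a ^+ k.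
Proof. by move=> H; rewrite {3}(L1 H k) exprD; ring. Qed.

Lemma L3 a h k : a ^+ k = a ^+ k.+1 * h ->
  (a ^+ k * h ^+ k) * (a ^+ k * h ^+ k) = a ^+ k * h ^+ k.
Proof. move=> H; rewrite -{3}(L4 H); ring. Qed.

Lemma L5 a h k i : a ^+ k = a ^+ k.+1 * h -> (k <= i)%N ->
  a ^+ i * (a ^+ k * h ^+ k) = a ^+ i.
Proof.
move=> H /subnK <-; rewrite exprD -mulrA L4 //.
Qed.

Lemma idemX e j : e * e = e -> e ^+ j.+1 = e.
Proof. by move=> H; elim: j => [|j IH]; rewrite ?expr1 // exprS IH. Qed.

Lemma killer1 e n j z : e * e = e -> n * e = n -> n ^+ j = 0 -> z * e = z ->
  (e + n) * z = 0 -> z = 0.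
Proof.
move=> He Hn Hj Hz H.
have Hz' : z = - n * z.
  by apply/eqP; rewrite -subr_eq0; rewrite -{1}Hz -H; apply/eqP; ring.
have : forall m, z = (- n) ^+ m * z.
  elim=> [|m IH]; first by rewrite expr0 mul1r.
  by rewrite exprS -mulrA -IH.
by move/(_ j); rewrite exprNn Hj mulr0 mul0r.
Qed.

Lemma killer e n j z i : e * e = e -> n * e = n -> n ^+ j = 0 -> z * e = z ->
  (e + n) ^+ i * z = 0 -> z = 0.
Proof.
move=> He Hn Hj; elim: i z => [|i IH] z Hz H; first by rewrite expr0 mul1r in H.
apply: (killer1 He Hn Hj Hz).
apply: IH.
  have -> : (e + n) * z * e = e * (z * e) + n * e * z by ring.
  by rewrite Hz Hn -mulrDl.
by rewrite mulrA -exprSr.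
Qed.
End Gen.
Section S.
Variables (K : fieldType) (A : comAlgType K) (V : {pred A}).
Hypothesis hV : submod_closed V.

Lemma V0 : 0 \in V. Proof. by case: hV. Qed.
Lemma VD u v : u \in V -> v \in V -> u + v \in V.
Proof. by case: hV => _ h Hu Hv; have := h 1 u v Hu Hv; rewrite scale1r. Qed.
Lemma VZ c u : u \in V -> c *: u \in V.
Proof. by case: hV => h0 h Hu; have := h c u 0 Hu h0; rewrite addr0. Qed.
Lemma VN u : u \in V -> - u \in V.
Proof. by move=> Hu; rewrite -scaleN1r; apply: VZ. Qed.
Lemma VB u v : u \in V -> v \in V -> u - v \in V.
Proof. by move=> Hu Hv; apply: VD => //; apply: VN. Qed.

Notation ev a p := (horner_alg a p).

Lemma VP (a : A) (s : {poly K}) M :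
  (forall i, (M <= i)%N -> a ^+ i \in V) -> a ^+ M * ev a s \in V.
Proof.
elim/poly_ind: s M => [|p c IH] M H.
  by rewrite rmorph0 mulr0 V0.
rewrite rmorphD rmorphM /= horner_algX horner_algC mulrDr.
apply: VD.
  have -> : a ^+ M * (ev a p * a) = a ^+ M.+1 * ev a p by rewrite exprSr; ring.
  by apply: IH => i Hi; apply: H; apply: ltnW.
by rewrite mulr_algr; apply: VZ; apply: H.
Qed.

Lemma alg_decomp (a : A) : algebraic_over a ->
  exists k s, (1 <= k)%N /\ a ^+ k = a ^+ k.+1 * ev a s.
Proof.
case=> p p0 hp.
have [m [q nq Dp]] := multiplicity_XsubC p 0.
rewrite p0 /= in nq.
have [r Dr] : exists r, q - (q.[0])%:P = r * 'X.
  have /factor_theorem [r Dr] : root (q - (q.[0])%:P) 0.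
    by rewrite /root hornerD hornerN hornerC subrr.
  by exists r; rewrite Dr subr0.
set c := q.[0] in Dr nq.
have c0 : c != 0 by [].
have Dq : q = c%:P + r * 'X by rewrite -Dr addrC subrK.
exists m.+1, (- (c^-1)%:P * r); split => //.
have : ev a p = 0 by [].
rewrite Dp subr0 rmorphM rmorphXn /= horner_algX Dq rmorphD rmorphM /=.
rewrite horner_algC horner_algX => H.
have H2 : a ^+ m * c%:A = - (a ^+ m.+1 * ev a r).
  by apply/eqP; rewrite -subr_eq0 opprK; apply/eqP; rewrite -H exprS; ring.
rewrite (rmorphM (horner_alg a)) rmorphN /= horner_algC.
have -> : a ^+ m.+1.+1 * (- c^-1%:A * ev a r) = c^-1%:A * (- (a ^+ m.+1 * ev a r) * a).
  rewrite exprS [a ^+ m.+1]exprS; ring.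
rewrite -H2 exprS.
have -> : c^-1%:A * (a ^+ m * c%:A * a) = a * a ^+ m * (c^-1%:A * c%:A) by ring.
by rewrite mulr_algr scalerA mulfV // scale1r mulr1.
Qed.

Lemma VPb (b a : A) (s : {poly K}) M :
  (forall i, (M <= i)%N -> b * a ^+ i \in V) -> b * (a ^+ M * ev a s) \in V.
Proof.
elim/poly_ind: s M => [|p c IH] M H.
  by rewrite rmorph0 !mulr0 V0.
rewrite rmorphD rmorphM /= horner_algX horner_algC !mulrDr.
apply: VD.
  have -> : b * (a ^+ M * (ev a p * a)) = b * (a ^+ M.+1 * ev a p) by rewrite exprSr; ring.
  by apply: IH => i Hi; apply: H; apply: ltnW.
by rewrite mulr_algr -scalerAr; apply: VZ; apply: H.
Qed.

Lemma VE (a : A) s k M : (forall i, (M <= i)%N -> a ^+ i \in V) ->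
  a ^+ k = a ^+ k.+1 * ev a s -> a ^+ k * (ev a s) ^+ k \in V.
Proof.
move=> HM H; rewrite (L2 H M) -rmorphXn.
apply: VP => i Hi; apply: HM; apply: leq_trans Hi; exact: leq_addl.
Qed.

Lemma key_fwd (z : A) : mathieu_subspace V ->
  (forall a : A, radical V a -> algebraic_over a) -> radical V z ->
  exists e M, (forall b, b * e \in V) /\ (forall m, (M <= m)%N -> z ^+ m * e = z ^+ m).
Proof.
move=> HM halg [N HN].
set a := z ^+ N.+1.
have Ha : forall m, (1 <= m)%N -> a ^+ m \in V.
  move=> m Hm; rewrite /a -exprM; apply: HN.
  by rewrite -{1}(muln1 N) leq_mul // ltnW.
have [k [s [k1 Hk]]] : exists k s, (1 <= k)%N /\ a ^+ k = a ^+ k.+1 * ev a s.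
  apply: alg_decomp; apply: halg; exists 1%N; exact: Ha.
exists (a ^+ k * (ev a s) ^+ k), (N.+1 * k)%N; split.
  move=> b; have [Nb HNb] := HM a Ha b.
  rewrite (L2 Hk Nb) -rmorphXn; apply: VPb => i Hi; apply: HNb.
  by apply: leq_trans Hi; exact: leq_addl.
move=> m Hm; rewrite -(subnK Hm) exprD exprM -/a -mulrA L4 //.
Qed.

Lemma Vsum (I : Type) (r : seq I) (P : pred I) (F : I -> A) :
  (forall i, P i -> F i \in V) -> \sum_(i <- r | P i) F i \in V.
Proof.
move=> H; apply: (big_ind (fun x => x \in V)); [exact: V0 | exact: VD | exact: H].
Qed.

Lemma fwd : mathieu_subspace V ->
  (forall a : A, radical V a -> algebraic_over a) -> is_ideal (radical V).
Proof.
move=> HM halg; split.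
- by exists 1%N => m Hm; rewrite expr0n; case: m Hm => // m _; rewrite V0.
- move=> x y Hx Hy.
  have [e1 [M1 [He1 HM1]]] := key_fwd HM halg Hx.
  have [e2 [M2 [He2 HM2]]] := key_fwd HM halg Hy.
  exists (M1 + M2)%N => m Hm; rewrite exprDn; apply: Vsum => -[i Hi] _ /=.
  have [Hi1|Hi1] := leqP M2 i.
    rewrite -(HM2 _ Hi1) mulrA -mulrnAl; apply: He2.
  have Hi2 : (M1 <= m - i)%N.
    move: Hm Hi1 Hi; clear; lia.
  rewrite -(HM1 _ Hi2) -mulrA [e1 * _]mulrC mulrA -mulrnAl; apply: He1.
- move=> r x Hx.
  have [e [M [He HM']]] := key_fwd HM halg Hx.
  by exists M => m Hm; rewrite exprMn -(HM' _ Hm) mulrA; apply: He.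
Qed.

Lemma idemV (e : A) : e * e = e -> radical V e -> e \in V.
Proof.
move=> He [N HN]; have := HN N.+1 (leqnSn N); by rewrite idemX.
Qed.

Lemma radV (x : A) : radical V x -> forall L, exists2 M, (L <= M)%N &
  forall M' (s : {poly K}), (M <= M')%N -> x ^+ M' * ev x s \in V.
Proof.
move=> [N HN] L; exists (maxn N L); first exact: leq_maxr.
move=> M' s HM'; apply: VP => i Hi; apply: HN.
by apply: leq_trans Hi; apply: leq_trans HM'; exact: leq_maxl.
Qed.

Lemma keyQ : is_ideal (radical V) ->
  (forall a : A, radical V a -> algebraic_over a) ->
  forall e : A, e * e = e -> radical V e -> forall c, c * e \in V.
Proof.
move=> [I0 ID IM] halg e He Re c.
set x := c * e.
have Rx : radical V x by apply: IM.
have xe : x * e = x by rewrite /x -mulrA He.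
have [j [t [j1 Hj]]] := alg_decomp (halg _ Rx).
set h := ev x t in Hj.
set f := x ^+ j * h ^+ j.
have xfV : x * f \in V.
  have [M HM HM'] := radV Rx j.
  rewrite /f (L2 Hj (M - j)) subnKC // -rmorphXn mulrA -exprS.
  apply: HM'; exact: leqnSn.
set n := x - x * f.
have nj : n ^+ j = 0.
  have -> : n = x * (1 - f) by rewrite /n; ring.
  have ff : (1 - f) * (1 - f) = 1 - f.
    have := L3 Hj; rewrite -/f => Hf.
    have -> : (1 - f) * (1 - f) = 1 - f - f + f * f by ring.
    by rewrite Hf subrK.
  have fj : (1 - f) ^+ j = 1 - f by rewrite -(prednK j1) idemX.
  rewrite exprMn fj.
  by rewrite mulrBr mulr1 /f L4 // subrr.
have ne : n * e = n by rewrite /n mulrBl xe -mulrA [f * e]mulrC mulrA xe.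
have Rn : radical V n.
  rewrite /n; apply: ID => //.
  have -> : - (x * f) = (- f) * x by ring.
  by apply: IM.
set y := e + n.
have Ry : radical V y by apply: ID.
have [i [u [i1 Hi]]] := alg_decomp (halg _ Ry).
set hu := ev y u in Hi.
have ye : y * e = y by rewrite /y mulrDl He ne.
have yie : y ^+ i * e = y ^+ i.
  by case: (i) i1 => // i' _; rewrite exprSr -mulrA ye.
have Ez : e - y * hu = 0.
  apply: (killer He ne nj (i := i)).
    by rewrite mulrBl He -mulrA [hu * e]mulrC mulrA ye.
  by rewrite mulrBr yie mulrA -exprSr -Hi subrr.
have Ee : e = y * hu by apply/eqP; rewrite -subr_eq0 Ez.
have yV : y \in V.
  have [M HM HM'] := radV Ry 0.
  have yL : forall L, y = y * (y * hu) ^+ L.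
    elim=> [|L IH]; first by rewrite expr0 mulr1.
    by rewrite exprSr mulrA -IH -Ee ye.
  rewrite (yL M) exprMn mulrA -exprS -rmorphXn; apply: HM'; exact: leqnSn.
have eV : e \in V by apply: idemV.
have nV : n \in V.
  have -> : n = y - e by rewrite /y; ring.
  by apply: VB.
have -> : x = x * f + n by rewrite /n addrC subrK.
by apply: VD.
Qed.

Lemma bwd : is_ideal (radical V) ->
  (forall a : A, radical V a -> algebraic_over a) -> mathieu_subspace V.
Proof.
move=> HI halg a Ha b.
have Ra : radical V a by exists 1%N.
have [k [s [k1 Hk]]] := alg_decomp (halg _ Ra).
set e := a ^+ k * (ev a s) ^+ k.
have eV : e \in V by apply: (VE (M := 1%N)).
have ee : e * e = e by apply: L3.
have Re : radical V e by exists 1%N => m Hm; rewrite -(prednK Hm) idemX.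
exists k => m Hm.
have -> : a ^+ m = a ^+ m * e by rewrite /e L5.
rewrite mulrA; exact: (keyQ HI halg ee Re).
Qed.
End S.

Theorem theorem4p12 (K : fieldType) (A : comAlgType K) (V : {pred A})
    (hV : submod_closed V)
    (halg : forall a : A, radical V a -> algebraic_over a) :
  mathieu_subspace V <-> is_ideal (radical V).
Proof.
split=> H; [exact: fwd | exact: bwd].
Qed.
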